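(* There is an absolute constant $C$ such that for every $n$ and every matroid $M$ on ground set $[n]$ of rank $2$, $R^{lin}_{1/3}(rank_M)\le C$.
   Context: A matroid $M=([n],\mathcal I)$ has rank function $rank_M(S)=\max\{|I|: I\subseteq S, I\in\mathcal I\}$; we view it as a function on $\mathbb F_2^n$ by identifying $x$ with $\{i:x_i=1\}$. For $S\subseteq[n]$, $\chi_S(x)=\sum_{i\in S}x_i\pmod 2$. Exact randomized $\mathbb F_2$-sketch complexity: for $f\colon\mathbb F_2^n\to\mathbb R$ and $\delta\in[0,1]$, $R^{lin}_\delta(f)$ is the smallest integer $k$ such that there exists a probability distribution over $k$-tuples of subsets $\mathbf S_1,\dots,\mathbf S_k\subseteq[n]$ and a function $g\colon\mathbb F_2^k\to\mathbb R$ with $\Pr_{\mathbf S_1,\dots,\mathbf S_k}[g(\chi_{\mathbf S_1}(x),\dots,\chi_{\mathbf S_k}(x))=f(x)]\ge1-\delta$ for every $x\in\mathbb F_2^n$. *)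

(* Defs.v *)
From Stdlib Require Import Reals.
From mathcomp Require Import all_boot.
Set Implicit Arguments. Unset Strict Implicit. Unset Printing Implicit Defensive.

Definition is_matroid (n : nat) (Ind : {set {set 'I_n}}) : Prop :=
  [/\ set0 \in Ind,
      (forall A B : {set 'I_n}, B \in Ind -> A \subset B -> A \in Ind) &
      (forall A B : {set 'I_n}, A \in Ind -> B \in Ind -> #|A| < #|B| ->
         exists2 x, x \in B :\: A & x |: A \in Ind)].

Definition mrank (n : nat) (Ind : {set {set 'I_n}}) (S : {set 'I_n}) : nat :=
  \max_(I in Ind | I \subset S) #|I|.

Definition matroid_rank (n : nat) (Ind : {set {set 'I_n}}) : nat :=
  mrank Ind setT.

(* Points of F_2^n are boolean vectors; x is identified with {i | x_i = 1}. *)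
Definition vec_to_set (n : nat) (x : {ffun 'I_n -> bool}) : {set 'I_n} :=
  [set i | x i].

Definition rank_fun (n : nat) (Ind : {set {set 'I_n}}) (x : {ffun 'I_n -> bool}) : R :=
  INR (mrank Ind (vec_to_set x)).

Definition chi (n : nat) (S : {set 'I_n}) (x : {ffun 'I_n -> bool}) : bool :=
  \big[xorb/false]_(i in S) x i.

Definition sketch (n k : nat) (Ss : {ffun 'I_k -> {set 'I_n}}) (x : {ffun 'I_n -> bool})
  : {ffun 'I_k -> bool} := [ffun j => chi (Ss j) x].

Definition is_distr (n k : nat) (p : {ffun 'I_k -> {set 'I_n}} -> R) : Prop :=
  (forall Ss, Rle 0 (p Ss)) /\ \big[Rplus/R0]_Ss p Ss = R1.

Definition success_prob (n k : nat) (p : {ffun 'I_k -> {set 'I_n}} -> R)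
  (g : {ffun 'I_k -> bool} -> R) (f : {ffun 'I_n -> bool} -> R) (x : {ffun 'I_n -> bool}) : R :=
  \big[Rplus/R0]_Ss
     (if Req_EM_T (g (sketch Ss x)) (f x) then p Ss else R0).

Definition sketchable (n : nat) (f : {ffun 'I_n -> bool} -> R) (delta : R) (k : nat) : Prop :=
  exists (p : {ffun 'I_k -> {set 'I_n}} -> R) (g : {ffun 'I_k -> bool} -> R),
    is_distr p /\ forall x, Rle (Rminus 1 delta) (success_prob p g f x).

Definition Rlin_is (n : nat) (f : {ffun 'I_n -> bool} -> R) (delta : R) (r : nat) : Prop :=
  sketchable f delta r /\ forall k, sketchable f delta k -> r <= k.

(* Main.v *)
Require Import Defs.
From Stdlib Require Import Reals Lra Classical.
From mathcomp Require Import all_boot zify.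
Set Implicit Arguments. Unset Strict Implicit. Unset Printing Implicit Defensive.

Lemma sum_INR (I : finType) (P : pred I) (F : I -> nat) :
  \big[Rplus/R0]_(i | P i) INR (F i) = INR (\sum_(i | P i) F i).
Proof. by rewrite (big_morph INR plus_INR (erefl _)). Qed.

Lemma sum_scale (I : finType) (P : pred I) (F : I -> R) (c : R) :
  \big[Rplus/R0]_(i | P i) (Rmult (F i) c) = (Rmult (\big[Rplus/R0]_(i | P i) F i) c).
Proof.
rewrite (big_morph (fun y => Rmult y c) (id1 := R0) (op1 := Rplus) (op2 := Rplus)) //.
- by move=> a b; rewrite Rmult_plus_distr_r.
- by rewrite Rmult_0_l.
Qed.

Lemma count_part (O T : finType) (Phi : O -> T) (P : pred T) :
  \sum_(t : T) (if P t then #|[set w | Phi w == t]| else 0) = #|[set w | P (Phi w)]|.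
Proof.
rewrite -big_mkcond /= -sum1_card.
rewrite (partition_big Phi P) /=; last by move=> w; rewrite inE.
apply: eq_bigr => t Pt; rewrite -sum1_card; apply: eq_bigl => w.
rewrite !inE; case: eqP => [-> |]; by rewrite ?Pt ?andbF ?andbT.
Qed.

Lemma Rsum_cnt (O T : finType) (Phi : O -> T) (P : pred T) (c : R) :
  \big[Rplus/R0]_t (if P t then Rmult (INR #|[set w | Phi w == t]|) c else R0)
  = (Rmult (INR #|[set w | P (Phi w)]|) c).
Proof.
transitivity (\big[Rplus/R0]_t (Rmult (INR (if P t then #|[set w | Phi w == t]| else 0)) c)).
  by apply: eq_bigr => t _; case: (P t) => //=; rewrite Rmult_0_l.
by rewrite sum_scale sum_INR count_part.
Qed.

Lemma sketchable_of_count n k (O : finType) (w0 : O) (Phi : O -> {ffun 'I_k -> {set 'I_n}})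
  (gn : {ffun 'I_k -> bool} -> nat) (fn : {ffun 'I_n -> bool} -> nat) :
  (forall x, 2 * #|O| <= 3 * #|[set w | gn (sketch (Phi w) x) == fn x]|) ->
  sketchable (fun x => INR (fn x)) (Rdiv 1 3) k.
Proof.
move=> H.
have N0 : (Rlt 0 (INR #|O|)) by apply: lt_0_INR; apply/ltP; apply/card_gt0P; exists w0.
exists (fun t => Rmult (INR #|[set w | Phi w == t]|) (Rinv (INR #|O|))), (fun s => INR (gn s)).
split; [split|].
- move=> t; apply: Rmult_le_pos; first exact: pos_INR.
  by apply: Rlt_le; apply: Rinv_0_lt_compat.
- transitivity (\big[Rplus/R0]_t (if xpredT t then Rmult (INR #|[set w | Phi w == t]|) (Rinv (INR #|O|)) else R0)).
    by apply: eq_bigr.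
  rewrite (Rsum_cnt Phi xpredT).
  have -> : [set w | xpredT (Phi w)] = setT by apply/setP => w; rewrite !inE.
  by rewrite cardsT; field; lra.
- move=> x; rewrite /success_prob.
  rewrite (_ : \big[Rplus/R0]_t _ = (\big[Rplus/R0]_t (if gn (sketch t x) == fn x then Rmult (INR #|[set w | Phi w == t]|) (Rinv (INR #|O|)) else R0))); last first.
    apply: eq_bigr => t _; case: Req_EM_T => [E | E].
      by have /eqP -> := INR_eq _ _ E.
    by case: eqP => // E'; case: E; rewrite E'.
  rewrite (Rsum_cnt Phi (fun t => gn (sketch t x) == fn x)).
  move: (H x); set G := #|_|; set N := #|O| => HG.
  have := le_INR _ _ (elimT leP HG); rewrite !mult_INR /= => h.
  have Ny : Rmult (INR N) (Rinv (INR N)) = R1 by field; apply: not_eq_sym; apply: Rlt_not_eq.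
  have y0 : Rlt 0 (Rinv (INR N)) by apply: Rinv_0_lt_compat.
  move: Ny y0 h N0; rewrite -/N.
  set y := Rinv _; set a := INR N; set b := INR G => *.
  nra.
Qed.

Definition nonloop n (Ind : {set {set 'I_n}}) (i : 'I_n) := [set i] \in Ind.
Definition par n (Ind : {set {set 'I_n}}) (i j : 'I_n) :=
  nonloop Ind j && (([set i; j] \notin Ind) || (i == j)).
Definition rep n (Ind : {set {set 'I_n}}) (i : 'I_n) : 'I_n :=
  odflt i [pick j | par Ind i j].

Lemma par_sym n (Ind : {set {set 'I_n}}) i j :
  nonloop Ind i -> par Ind i j -> par Ind j i.
Proof. by rewrite /par => -> /andP[_]; rewrite setUC eq_sym. Qed.

Lemma par_trans n (Ind : {set {set 'I_n}}) i j k : is_matroid Ind ->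
  par Ind i j -> par Ind j k -> par Ind i k.
Proof.
move=> [_ _ aug] /andP[nj Hij] /andP[nk Hjk]; rewrite /par nk /=.
case: (eqVneq i k) => [-> |nik]; first by rewrite orbT.
rewrite orbF; apply/negP => Iik.
have [z] : exists2 z, z \in [set i; k] :\: [set j] & z |: [set j] \in Ind.
  by apply: aug => //; rewrite cards1 cards2 nik.
rewrite !inE => /andP[nzj /orP[/eqP ez | /eqP ez]]; subst z.
- by move: Hij; rewrite (negbTE nzj) orbF => /negP.
- by move: Hjk; rewrite eq_sym (negbTE nzj) orbF setUC => /negP.
Qed.

Lemma rep_par n (Ind : {set {set 'I_n}}) i : nonloop Ind i -> par Ind i (rep Ind i).
Proof.
move=> ni; rewrite /rep; case: pickP => [j // | /(_ i)].
by rewrite /par ni eqxx orbT.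
Qed.

Lemma rep_eq n (Ind : {set {set 'I_n}}) i j : is_matroid Ind -> nonloop Ind i ->
  par Ind i j -> rep Ind i = rep Ind j.
Proof.
move=> hm ni pij; have nj : nonloop Ind j by case/andP: pij.
have pji := par_sym ni pij.
rewrite /rep (@eq_pick _ _ (par Ind j)); last first.
  move=> y; apply/idP/idP => h; [exact: par_trans hm pji h | exact: par_trans hm pij h].
case: pickP => [//|/(_ j)]; by rewrite /par nj eqxx orbT.
Qed.

Lemma rep_neq n (Ind : {set {set 'I_n}}) a b : is_matroid Ind -> a != b ->
  [set a; b] \in Ind -> rep Ind a != rep Ind b.
Proof.
move=> hm nab Iab; apply/eqP => E.
have [_ down _] := hm.
have na : nonloop Ind a by rewrite /nonloop; apply: down Iab _; rewrite sub1set !inE eqxx.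
have nb : nonloop Ind b by rewrite /nonloop; apply: down Iab _; rewrite sub1set !inE eqxx orbT.
have pa := rep_par na; have pb := rep_par nb; rewrite -E in pb.
have nr : nonloop Ind (rep Ind a) by case/andP: pa.
have := par_trans hm pa (par_sym nb pb).
by rewrite /par nb /= (negbTE nab) orbF Iab.
Qed.

Lemma mrank_ge n (Ind : {set {set 'I_n}}) (I S : {set 'I_n}) :
  I \in Ind -> I \subset S -> #|I| <= mrank Ind S.
Proof.
move=> h1 h2; rewrite /mrank.
by apply: leq_bigmax_cond; rewrite h1 h2.
Qed.

Lemma mrank_le2 n (Ind : {set {set 'I_n}}) (S : {set 'I_n}) : matroid_rank Ind = 2 -> mrank Ind S <= 2.
Proof.
move=> hr; rewrite -hr /matroid_rank /mrank; apply/bigmax_leqP => I /andP[h1 _].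
exact: mrank_ge h1 (subsetT I).
Qed.

Lemma mrank_le1 n (Ind : {set {set 'I_n}}) (S : {set 'I_n}) : is_matroid Ind ->
  (forall a b, a \in S -> b \in S -> a != b -> [set a; b] \notin Ind) -> mrank Ind S <= 1.
Proof.
move=> [_ down _] H; apply/bigmax_leqP => I /andP[hI hIS]; rewrite leqNgt.
apply/negP => /card_gt1P [a [b [ha hb nab]]].
have : [set a; b] \in Ind by apply: down hI _; rewrite subUset !sub1set ha hb.
by apply/negP; apply: H => //; apply: (subsetP hIS).
Qed.

Lemma mrank_le0 n (Ind : {set {set 'I_n}}) (S : {set 'I_n}) : is_matroid Ind ->
  (forall a, a \in S -> ~~ nonloop Ind a) -> mrank Ind S <= 0.
Proof.
move=> [_ down _] H; apply/bigmax_leqP => I /andP[hI hIS].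
rewrite leqn0 cards_eq0; apply/eqP/setP => a; rewrite inE; apply/negP => ha.
have : nonloop Ind a by rewrite /nonloop; apply: down hI _; rewrite sub1set.
by apply/negP; apply: H; apply: (subsetP hIS).
Qed.

Lemma chiE n (S : {set 'I_n}) (x : {ffun 'I_n -> bool}) : chi S x = \big[addb/false]_(i in S) x i.
Proof.
rewrite /chi; apply: (big_ind2 (fun a b => a = b)) => // a1 a2 b1 b2 -> ->.
by case: a2; case: b2.
Qed.

Lemma chi0 n (S : {set 'I_n}) (x : {ffun 'I_n -> bool}) : (forall i, i \in S -> x i = false) -> chi S x = false.
Proof. by move=> H; rewrite chiE big1. Qed.

Lemma chiD1 n (S : {set 'I_n}) (x : {ffun 'I_n -> bool}) a : a \in S -> chi S x = x a (+) chi (S :\ a) x.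
Proof.
move=> aS; rewrite !chiE (bigD1 a) //=; congr (_ (+) _).
by apply: eq_bigl => i; rewrite !inE andbC.
Qed.

Definition toggle n (a : 'I_n) (S : {set 'I_n}) := if a \in S then S :\ a else a |: S.

Lemma in_toggle n (a i : 'I_n) S :
  (i \in toggle a S) = (if i == a then a \notin S else i \in S).
Proof.
rewrite /toggle; case: (eqVneq i a) => [-> | nia].
  by case: (boolP (a \in S)) => h; rewrite !inE eqxx ?h.
by case: (a \in S); rewrite !inE (negbTE nia).
Qed.

Lemma toggleK n (a : 'I_n) : involutive (toggle a).
Proof.
move=> S; apply/setP => i; rewrite in_toggle; case: (eqVneq i a) => [->|nia]; rewrite in_toggle ?eqxx ?negbK ?(negbTE nia) //.
Qed.

Lemma chi_toggle n (S : {set 'I_n}) (x : {ffun 'I_n -> bool}) a : x a -> chi (toggle a S) x = ~~ chi S x.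
Proof.
move=> xa; rewrite /toggle; case: (boolP (a \in S)) => aS.
  by rewrite (chiD1 x aS) xa /= negbK.
have aS' : a \in a |: S by rewrite !inE eqxx.
by rewrite (chiD1 x aS') setU1K // xa.
Qed.

Lemma count_inj (O T : finType) (B : {set O}) (phi : T -> O -> O) (F : O -> T) :
  (forall v, injective (phi v)) -> (forall v w, w \in B -> F (phi v w) = v) ->
  #|B| * #|T| <= #|O|.
Proof.
move=> inj hF.
have : #|[set phi p.2 p.1 | p in setX B [set: T]]| = #|setX B [set: T]|.
  apply: card_in_imset => [[w v] [w' v']] /setXP[hw _] /setXP[hw' _] /= E.
  have ev : v = v' by rewrite -(hF v w hw) -(hF v' w' hw') E.
  by subst v'; rewrite (inj _ _ _ E).
by rewrite cardsX cardsT => <-; apply: max_card.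
Qed.

Notation Om n := ({set 'I_n} * {set 'I_n} * {ffun 'I_5 -> {set 'I_n}})%type.

Definition col n (Ind : {set {set 'I_n}}) (w : Om n) (i : 'I_n) : nat :=
  (rep Ind i \in w.1.1) + 2 * (rep Ind i \in w.1.2).
Definition Sset n (Ind : {set {set 'I_n}}) (w : Om n) (c : nat) (j : 'I_5) : {set 'I_n} :=
  [set i | nonloop Ind i && (col Ind w i == c) && (i \in w.2 j)].
Definition Phi n (Ind : {set {set 'I_n}}) (w : Om n) : {ffun 'I_20 -> {set 'I_n}} :=
  [ffun r : 'I_20 => Sset Ind w (r %% 4) (inord (r %/ 4))].
Definition hit (s : {ffun 'I_20 -> bool}) (c : 'I_4) : bool :=
  [exists r : 'I_20, (r %% 4 == c) && s r].
Definition gn (s : {ffun 'I_20 -> bool}) : nat := minn 2 #|[set c : 'I_4 | hit s c]|.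

Lemma col_lt4 n (Ind : {set {set 'I_n}}) (w : Om n) i : col Ind w i < 4.
Proof. by rewrite /col; case: (_ \in _); case: (_ \in _). Qed.

Lemma hit_true n (Ind : {set {set 'I_n}}) (w : Om n) x (c : 'I_4) (j : 'I_5) :
  chi (Sset Ind w c j) x -> hit (sketch (Phi Ind w) x) c.
Proof.
move=> h; apply/existsP.
have lt : c + 4 * j < 20 by have := ltn_ord c; have := ltn_ord j; lia.
have e1 : (c + 4 * j) %% 4 = c by have := ltn_ord c; lia.
have e2 : (c + 4 * j) %/ 4 = j by have := ltn_ord c; lia.
exists (Ordinal lt); rewrite /= e1 eqxx /= /sketch /Phi !ffunE /= e1 e2.
by rewrite inord_val.
Qed.

Lemma hit_false n (Ind : {set {set 'I_n}}) (w : Om n) x (c : 'I_4) :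
  (forall j, chi (Sset Ind w c j) x = false) -> hit (sketch (Phi Ind w) x) c = false.
Proof.
move=> H; apply/existsP => [[r /andP[/eqP e]]].
by rewrite /sketch /Phi !ffunE e H.
Qed.

Definition B2 n (Ind : {set {set 'I_n}}) (x : {ffun 'I_n -> bool}) a :=
  [set w : Om n | [forall j : 'I_5, ~~ chi (Sset Ind w (col Ind w a) j) x]].

Lemma B2_bound n (Ind : {set {set 'I_n}}) (x : {ffun 'I_n -> bool}) a :
  nonloop Ind a -> x a -> #|B2 Ind x a| * 32 <= #|{: Om n}|.
Proof.
move=> na xa.
have := @count_inj _ {ffun 'I_5 -> bool} (B2 Ind x a)
  (fun v w => (w.1.1, w.1.2, [ffun j => if v j then toggle a (w.2 j) else w.2 j]))
  (fun w => [ffun j => chi (Sset Ind w (col Ind w a) j) x]).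
rewrite card_ffun card_bool card_ord; apply.
- move=> v [[p q] f] [[p' q'] f'] /= [-> -> E]; congr (_, _, _); apply/ffunP => j.
  move/ffunP: E => /(_ j); rewrite !ffunE; case: (v j) => //.
  exact: (can_inj (toggleK a)).
- move=> v [[p q] f]; rewrite inE => /forallP H; apply/ffunP => j; rewrite !ffunE.
  have := H j; case: (boolP (v j)) => vj hj.
  + have -> : Sset Ind (p, q, [ffun j0 => if v j0 then toggle a (f j0) else f j0])
        (col Ind (p, q, [ffun j0 => if v j0 then toggle a (f j0) else f j0]) a) j
      = toggle a (Sset Ind (p, q, f) (col Ind (p, q, f) a) j).
      apply/setP => i; rewrite in_toggle !inE ffunE vj in_toggle.
      case: (eqVneq i a) => [->|] //.
      by rewrite na !eqxx.
    by rewrite chi_toggle // (negbTE hj).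
  + have -> : Sset Ind (p, q, [ffun j0 => if v j0 then toggle a (f j0) else f j0])
        (col Ind (p, q, [ffun j0 => if v j0 then toggle a (f j0) else f j0]) a) j
      = Sset Ind (p, q, f) (col Ind (p, q, f) a) j.
      by apply/setP => i; rewrite !inE ffunE (negbTE vj).
    by rewrite (negbTE hj); apply/esym/negbTE.
Qed.

Definition B1 n (Ind : {set {set 'I_n}}) a b :=
  [set w : Om n | col Ind w a == col Ind w b].

Lemma B1_bound n (Ind : {set {set 'I_n}}) a b :
  rep Ind a != rep Ind b -> #|B1 Ind a b| * 4 <= #|{: Om n}|.
Proof.
move=> nab.
have := @count_inj _ (bool * bool)%type (B1 Ind a b)
  (fun v w => (if v.1 then toggle (rep Ind b) w.1.1 else w.1.1,
               if v.2 then toggle (rep Ind b) w.1.2 else w.1.2, w.2))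
  (fun w => ((rep Ind a \in w.1.1) != (rep Ind b \in w.1.1),
             (rep Ind a \in w.1.2) != (rep Ind b \in w.1.2))).
rewrite card_prod card_bool; apply.
- move=> [v1 v2] [[p q] f] [[p' q'] f'] /= [E1 E2 ->].
  congr (_, _, _).
  + by move: E1; case: v1 => //; apply: (can_inj (toggleK _)).
  + by move: E2; case: v2 => //; apply: (can_inj (toggleK _)).
- move=> [v1 v2] [[p q] f]; rewrite inE /col /= => Hc.
  case: v1; case: v2; rewrite /= ?in_toggle ?eqxx ?(negbTE nab);
  move: Hc; case: (rep Ind a \in p); case: (rep Ind b \in p);
  case: (rep Ind a \in q); case: (rep Ind b \in q) => //.
Qed.

Lemma main_count n (Ind : {set {set 'I_n}}) (x : {ffun 'I_n -> bool}) :
  is_matroid Ind -> matroid_rank Ind = 2 ->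
  2 * #|{: Om n}| <= 3 * #|[set w : Om n | gn (sketch (Phi Ind w) x) == mrank Ind (vec_to_set x)]|.
Proof.
move=> hm hr; set G := [set w | _].
have hC := cardsC G.
have [_ down _] := hm.
case: (boolP [exists a, exists b, [&& x a, x b, a != b & [set a; b] \in Ind]]).
  move=> /existsP[a /existsP[b /and4P[xa xb nab Iab]]].
  have mr : mrank Ind (vec_to_set x) = 2.
    apply/eqP; rewrite eqn_leq mrank_le2 //=.
    apply: leq_trans (mrank_ge Iab _); first by rewrite cards2 nab.
    by rewrite subUset !sub1set !inE xa xb.
  have na : nonloop Ind a by rewrite /nonloop; apply: down Iab _; rewrite sub1set !inE eqxx.
  have nb : nonloop Ind b by rewrite /nonloop; apply: down Iab _; rewrite sub1set !inE eqxx orbT.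
  have sub : ~: G \subset (B1 Ind a b :|: B2 Ind x a) :|: B2 Ind x b.
    apply/subsetP => w; rewrite inE; apply: contraR; rewrite !inE !negb_or.
    move=> /andP[/andP[h1 h2] h3].
    move: h2 h3; rewrite !negb_forall => /existsP[j1]; rewrite negbK => hj1.
    move=> /existsP[j2]; rewrite negbK => hj2.
    set ca : 'I_4 := Ordinal (col_lt4 Ind w a).
    set cb : 'I_4 := Ordinal (col_lt4 Ind w b).
    have ha : hit (sketch (Phi Ind w) x) ca by exact: (@hit_true _ _ _ _ ca j1 hj1).
    have hb : hit (sketch (Phi Ind w) x) cb by exact: (@hit_true _ _ _ _ cb j2 hj2).
    have ne : ca != cb by rewrite -val_eqE.
    have s2 : [set ca; cb] \subset [set c | hit (sketch (Phi Ind w) x) c].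
      by rewrite subUset !sub1set !inE ha hb.
    rewrite mr /gn; apply/eqP/minn_idPl.
    by apply: leq_trans (subset_leq_card s2); rewrite cards2 ne.
  have c1 := subset_leq_card sub.
  have c2 := (leq_card_setU (B1 Ind a b :|: B2 Ind x a) (B2 Ind x b)).1.
  have c3 := (leq_card_setU (B1 Ind a b) (B2 Ind x a)).1.
  have b1 := B1_bound (rep_neq hm nab Iab).
  have b2 := B2_bound na xa.
  have b3 := B2_bound nb xb.
  move: b1 b2 b3; rewrite -hC => b1 b2 b3; lia.
move=> nopair.
have np : forall a b, x a -> x b -> a != b -> [set a; b] \notin Ind.
  move=> a b h1 h2 h3; apply/negP => h4; move/negP: nopair; apply.
  by apply/existsP; exists a; apply/existsP; exists b; rewrite h1 h2 h3 h4.
case: (boolP [exists a, x a && nonloop Ind a]).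
  move=> /existsP[a /andP[xa na]].
  have mr : mrank Ind (vec_to_set x) = 1.
    apply/eqP; rewrite eqn_leq; apply/andP; split.
      by apply: mrank_le1 => // a' b'; rewrite !inE; apply: np.
    by apply: leq_trans (mrank_ge na _); rewrite ?cards1 // sub1set inE.
  have reps : forall i, x i -> nonloop Ind i -> rep Ind i = rep Ind a.
    move=> i xi ni; apply/esym/(rep_eq hm na).
    rewrite /par ni /=; case: (eqVneq a i) => [_|nai]; first by rewrite orbT.
    by rewrite np.
  have sub : ~: G \subset B2 Ind x a.
    apply/subsetP => w; rewrite inE; apply: contraR; rewrite !inE.
    rewrite negb_forall => /existsP[j]; rewrite negbK => hj.
    set ca : 'I_4 := Ordinal (col_lt4 Ind w a).
    rewrite /gn; have -> : [set c | hit (sketch (Phi Ind w) x) c] = [set ca].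
      apply/setP => c; rewrite !inE; case: (eqVneq c ca) => [-> | ne].
        exact: (@hit_true _ _ _ _ ca j hj).
      apply/negbTE; rewrite hit_false // => j'; apply: chi0 => i; rewrite !inE.
      move=> /andP[/andP[ni /eqP ci] _]; apply/negP => xi.
      move: ne; rewrite -val_eqE /= -ci /col (reps i xi ni).
      by rewrite eqxx.
    by rewrite cards1 mr.
  have c1 := subset_leq_card sub.
  have b2 := B2_bound na xa.
  move: b2; rewrite -hC => b2; lia.
move=> noloop.
have mr : mrank Ind (vec_to_set x) = 0.
  apply/eqP; rewrite -leqn0; apply: mrank_le0 => // a; rewrite inE => xa.
  by apply/negP => na; move/negP: noloop; apply; apply/existsP; exists a; rewrite xa.
have -> : G = setT.
  apply/setP => w; rewrite !inE mr /gn.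
  have -> : [set c | hit (sketch (Phi Ind w) x) c] = set0.
    apply/setP => c; rewrite !inE; apply: hit_false => j; apply: chi0 => i.
    rewrite !inE => /andP[/andP[ni _] _]; apply/negP => xi.
    by move/negP: noloop; apply; apply/existsP; exists i; rewrite xi.
  by rewrite cards0.
by rewrite cardsT; apply: leq_mul.
Qed.

Lemma min_exists (P : nat -> Prop) m : P m ->
  exists r, (P r /\ forall k, P k -> r <= k) /\ r <= m.
Proof.
elim/ltn_ind: m => m IH Pm.
case: (classic (exists k, k < m /\ P k)) => [[k [km Pk]] | H].
  have [r [[Pr Hr] rk]] := IH k km Pk.
  by exists r; split => //; apply: leq_trans rk (ltnW km).
exists m; split => //; split => // k Pk; rewrite leqNgt; apply/negP => km.
by apply: H; exists k.
Qed.

Theorem theorem1 :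
  exists C : nat,
    forall (n : nat) (Ind : {set {set 'I_n}}),
      is_matroid Ind -> matroid_rank Ind = 2 ->
      exists r : nat, Rlin_is (rank_fun Ind) (Rdiv 1 3) r /\ r <= C.
Proof.
exists 20 => n Ind hm hr.
have sk : sketchable (rank_fun Ind) (Rdiv 1 3) 20.
  apply: (@sketchable_of_count n 20 _ (set0, set0, [ffun => set0]) (Phi Ind) gn
            (fun x => mrank Ind (vec_to_set x))).
  by move=> x; apply: main_count.
have [r [[Pr Hr] rk]] := min_exists sk.
by exists r.
Qed.
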